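(* For every $\varepsilon>0$ there is $\delta>0$ such that the following holds. Let $G=(V_1,V_2,E)$ be a bipartite graph with $|V_1|\ge|V_2|/2$, and let $\mathcal P=\{x_0,x_1,\ldots,x_{|V_2|^{0.5}}\}$ be an $\varepsilon$-pair-star of size $|V_2|^{0.5}$ rooted at $x_0$ associated to $V_1$. If $W\subset V_2$ is chosen uniformly at random among all subsets of $V_2$, then $\mathbb P\big(|A^W_{\mathcal P}|\ge\delta|V_2|^{0.5}\big)\ge 3/4$, where $$A^W_{\mathcal P}:=\{d^W(x_i)-d^W(x_0): i\in[|V_2|^{0.5}]\}\cap[-3|V_2|^{0.5},3|V_2|^{0.5}].$$
   Context: A bipartite graph $G=(V_1,V_2,E)$ has vertex set $V_1\sqcup V_2$ and edge set $E\subset V_1\times V_2$; $N(v)$ is the neighbourhood and $d(v)$ the degree of $v$, and for $S\subset V_2$, $d^S(v)=|N(v)\cap S|$. For $u,v\in V_1$, $\mathrm{div}(u,v)=N(u)\triangle N(v)$. An $\varepsilon$-pair-star of size $k$ associated to $V_1$ rooted at $x_0$ is a set $\{x_0,x_1,\ldots,x_k\}\subset V_1$ with $|d(x_j)-d(x_0)|\le|V_2|^{0.5}$ for all $j\in[k]$ and $|\mathrm{div}(x_i,x_j)|\ge\varepsilon|V_2|$ for all $i\ne j$ in $\{0,\ldots,k\}$. Floors/ceilings of non-integer sizes are ignored. *)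

(* Defs.v *)
From HB Require Import structures.
From mathcomp Require Import all_boot all_order all_algebra.
From mathcomp Require Import reals.
Set Implicit Arguments. Unset Strict Implicit. Unset Printing Implicit Defensive.
Import Order.TTheory GRing.Theory Num.Theory.
Local Open Scope ring_scope.

Section Bip.
Variables (V1 V2 : finType) (E : V1 -> V2 -> bool).

Definition nbh (v : V1) : {set V2} := [set y | E v y].
Definition deg (v : V1) : nat := #|nbh v|.
Definition degS (S : {set V2}) (v : V1) : nat := #|nbh v :&: S|.
Definition divset (u v : V1) : {set V2} :=
  (nbh u :\: nbh v) :|: (nbh v :\: nbh u).

(* An eps-pair-star of size k associated to V1 rooted at x0: the set P = {x0,...,xk}
   of k+1 distinct vertices of V1 containing x0, with the degree and divergence conditions. *)
Definition pair_star (R : realType) (eps : R) (k : nat) (x0 : V1) (P : {set V1}) : Prop :=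
  [/\ x0 \in P, #|P| = k.+1,
      (forall x, x \in P -> `|(deg x)%:R - (deg x0)%:R| <= Num.sqrt (#|V2|%:R : R)) &
      (forall x y, x \in P -> y \in P -> x != y -> eps * #|V2|%:R <= (#|divset x y|)%:R)].

(* A^W_P = {d^W(x_i) - d^W(x_0) : i in [k]} ∩ [-3 sqrt|V2|, 3 sqrt|V2|], as a duplicate-free list of integers *)
Definition A_set (R : realType) (W : {set V2}) (x0 : V1) (P : {set V1}) : seq int :=
  undup [seq a <- [seq ((degS W x)%:Z - (degS W x0)%:Z) | x <- enum (P :\ x0)]
         | `|(a%:~R : R)| <= 3 * Num.sqrt (#|V2|%:R : R)].

End Bip.

(* Main.v *)
Require Import Defs.
From HB Require Import structures.
From mathcomp Require Import all_boot all_order all_algebra.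
From mathcomp Require Import reals.
From mathcomp Require Import zify ring lra.
Import Order.TTheory GRing.Theory Num.Theory.

Lemma bin_mono d j : (j.*2 < d)%N -> ('C(d,j) <= 'C(d,j.+1))%N.
Proof.
move=> h; have := mul_bin_left d j.
have : (j.+1 <= d - j)%N by lia.
move: ('C(d,j)) ('C(d,j.+1)) => a b h1 h2.
have : (j.+1 * a <= j.+1 * b)%N by rewrite h2 leq_mul2r h1 orbT.
by rewrite leq_mul2l.
Qed.

Lemma bin_le_mid d b : ('C(d,b) <= 'C(d, d./2))%N.
Proof.
have low : forall t b, (b + t = d./2)%N -> ('C(d,b) <= 'C(d, d./2))%N.
  elim=> [|t IH] b0 e; first by rewrite -e addn0.
  apply: leq_trans (IH b0.+1 _); last by rewrite addSnnS.
  apply: bin_mono.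
  have := odd_double_half d; case: (odd d) => /=; lia.
case: (leqP b d./2) => hb.
  by apply: (low (d./2 - b)); rewrite subnKC.
case: (leqP b d) => hbd; last by rewrite bin_small.
rewrite -bin_sub //; apply: (low (d./2 - (d - b))).
rewrite subnKC //.
have := odd_double_half d; case: (odd d) => /=; lia.
Qed.

Lemma bin_e_rec m : ('C(m.+1.*2, m.+1) * m.+1 = 2 * m.*2.+1 * 'C(m.*2, m))%N.
Proof.
have h1 := mul_bin_diag (m.+1.*2) m.
have h2 := mul_bin_diag (m.*2.+1) m.
rewrite doubleS /= in h1 *. rewrite /= in h2.
have h3 : 'C(m.*2.+1, m.+1) = 'C(m.*2.+1, m).
  rewrite -(bin_sub (n:=m.*2.+1) (m:=m)); last lia.
  congr 'C(_,_); lia.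
rewrite h3 in h2.
have : ('C(m.*2.+2, m.+1) = 2 * 'C(m.*2.+1, m))%N.
  have : (m.+1 * 'C(m.*2.+2, m.+1) = m.+1 * (2 * 'C(m.*2.+1, m)))%N.
    rewrite -h1; lia.
  by move/eqP; rewrite eqn_mul2l /= => /eqP.
move=> ->; nia.
Qed.

Lemma bin_e m : ('C(m.*2, m)^2 * m.*2.+1 <= 16^m)%N.
Proof.
elim: m => [|m IH]; first by rewrite bin0.
have e := bin_e_rec m.
rewrite [16 ^ _]expnS; move: IH e; move: ('C(m.*2, m)) ('C(m.+1.*2, m.+1)) (16^m) => a b T IH e.
rewrite -(@leq_pmul2r (m.+1 ^ 2)) //.
have -> : (b ^ 2 * (m.+1).*2.+1 * m.+1 ^ 2 = 4 * (m.*2.+1 * (m.*2.+3)) * (a^2 * m.*2.+1))%N.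
  have : (b ^ 2 * m.+1 ^ 2 = (2 * m.*2.+1 * a)^2)%N by rewrite -e; lia.
  move=> e2; rewrite doubleS.
  transitivity (b ^ 2 * m.+1 ^ 2 * m.*2.+3)%N; first lia.
  rewrite e2; lia.
apply: (leq_trans (leq_mul (leqnn _) IH)).
have h : (4 * (m.*2.+1 * m.*2.+3) <= 16 * m.+1 ^ 2)%N by nia.
by rewrite [(16 * T * _)%N]mulnAC; apply: leq_mul.
Qed.

Lemma bin_o_rec m : (m.+1 * 'C(m.*2.+1, m) = m.*2.+1 * 'C(m.*2, m))%N.
Proof.
have h2 := mul_bin_diag (m.*2.+1) m.
have h3 : 'C(m.*2.+1, m.+1) = 'C(m.*2.+1, m).
  rewrite -(bin_sub (n:=m.*2.+1) (m:=m)); last lia.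
  congr 'C(_,_); lia.
by rewrite /= h3 in h2.
Qed.

Lemma bin_o m : ('C(m.*2.+1, m)^2 * m.*2.+2 <= 4 * 16^m)%N.
Proof.
have IH := bin_e m; have e := bin_o_rec m.
move: IH e; move: ('C(m.*2, m)) ('C(m.*2.+1, m)) (16^m) => a b T IH e.
rewrite -(@leq_pmul2r (m.+1 ^ 2)) //.
have -> : (b ^ 2 * m.*2.+2 * m.+1 ^ 2 = (m.*2.+1 * m.*2.+2) * (a^2 * m.*2.+1))%N.
  have : (b ^ 2 * m.+1 ^ 2 = (m.*2.+1 * a)^2)%N by rewrite -e; lia.
  move=> e2.
  transitivity (b ^ 2 * m.+1 ^ 2 * m.*2.+2)%N; first lia.
  rewrite e2; lia.
apply: (leq_trans (leq_mul (leqnn _) IH)).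
have h : ((m.*2.+1 * m.*2.+2) <= 4 * m.+1 ^ 2)%N by nia.
by rewrite [(4 * T * _)%N]mulnAC; apply: leq_mul.
Qed.

Lemma bin_sq d b : ('C(d,b)^2 * d.+1 <= 4 ^ d)%N.
Proof.
apply: (@leq_trans ('C(d, d./2)^2 * d.+1)%N).
  by rewrite leq_mul2r leq_exp2r ?bin_le_mid ?orbT.
have := odd_double_half d; set k := d./2; move: k (half_bit_double k (odd d)) => k hk.
case: (odd d) hk => /= hk hd; rewrite -hd /= ?add0n ?add1n.
  have -> : (4 ^ k.*2.+1 = 4 * 16 ^ k)%N by rewrite expnS -mul2n expnM.
  exact: bin_o.
have -> : (4 ^ k.*2 = 16 ^ k)%N by rewrite -mul2n expnM.
exact: bin_e.
Qed.

Set Implicit Arguments. Unset Strict Implicit. Unset Printing Implicit Defensive.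

Lemma distinct_count (T : finType) (Q Q' : {set T}) (f : T -> int) (good : pred int) :
  Q' \subset Q ->
  (#|Q'| <= size (undup [seq a <- [seq f x | x <- enum Q] | good a])
     + #|[set x in Q' | ~~ good (f x)]|
     + \sum_(x in Q') #|[set y in Q' | (y != x) && (f y == f x)]|)%N.
Proof.
move=> sQ.
set C := fun x => [set y in Q' | (y != x) && (f y == f x)].
set Z := [set x in Q' | good (f x) && (#|C x| == 0%N)].
set B := [set x in Q' | ~~ good (f x)].
set Cp := [set x in Q' | (0 < #|C x|)%N].
have h1 : (#|Z| <= size (undup [seq a <- [seq f x | x <- enum Q] | good a]))%N.
  rewrite cardE -(size_map f).
  apply: uniq_leq_size.
    rewrite map_inj_in_uniq ?enum_uniq // => x y; rewrite !mem_enum => xZ yZ fxy.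
    apply/eqP/negPn/negP => nxy.
    move: xZ; rewrite inE => /andP [xQ /andP [_ /eqP /cards0_eq hC]].
    have : y \in C x by rewrite inE; move: yZ; rewrite inE => /andP [-> _]; rewrite eq_sym nxy fxy eqxx.
    by rewrite hC inE.
  move=> a /mapP [x]; rewrite mem_enum inE => /andP [xQ /andP [gx _]] ->.
  rewrite mem_undup mem_filter gx /=; apply: map_f.
  by rewrite mem_enum (subsetP sQ).
have h2 : (#|Q'| <= #|Z| + #|B| + #|Cp|)%N.
  apply: (@leq_trans #|Z :|: B :|: Cp|).
    apply: subset_leq_card; apply/subsetP => x xQ; rewrite !inE xQ /=.
    case: (good (f x)) => //=; rewrite orbF.
    by case: (#|C x|).
  rewrite cardsU cardsU; apply: (leq_trans (leq_subr _ _)); rewrite leq_add2r; exact: leq_subr.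
have h3 : (#|Cp| <= \sum_(x in Q') #|C x|)%N.
  rewrite -sum1_card (bigID (fun x => (0 < #|C x|)%N) (fun x => x \in Q')) /=.
  apply: leq_trans (leq_addr _ _).
  rewrite (eq_bigl (fun x => (x \in Q') && (0 < #|C x|)%N)); last by move=> x; rewrite inE.
  by apply: leq_sum => x /andP [].
apply: (leq_trans h2); rewrite -addnA -[X in (_ <= X)%N]addnA.
exact: (leq_add h1 (leq_add (leqnn _) h3)).
Qed.

Local Open Scope ring_scope.

Section SetPart.
Variable V : finType.

Definition sdiff (W T : {set V}) := (W :\: T) :|: (T :\: W).

Lemma sdiff_inv T : involutive (sdiff ^~ T).
Proof.
move=> W; apply/setP => y; rewrite !inE.
by case: (y \in W); case: (y \in T).
Qed.

Lemma cardZ (S : {set V}) : (#|S|%:Z) = \sum_(y : V) ((y \in S) : nat)%:Z.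
Proof.
rewrite -natz -sum1_card big_mkcond /= natr_sum.
by apply: eq_bigr => y _; rewrite natz; case: (y \in S).
Qed.

Lemma diff_key (U V' W : {set V}) :
  (#|U :&: sdiff W (V' :\: U)|%:Z - #|V' :&: sdiff W (V' :\: U)|%:Z) =
  #|W :&: ((U :\: V') :|: (V' :\: U))|%:Z - #|V' :\: U|%:Z.
Proof.
rewrite !cardZ -!sumrB; apply: eq_bigr => y _; rewrite !inE.
by case: (y \in U); case: (y \in V'); case: (y \in W).
Qed.

Lemma deg_key (U V' : {set V}) :
  #|(U :\: V') :|: (V' :\: U)|%:Z - 2 * #|V' :\: U|%:Z = #|U|%:Z - #|V'|%:Z.
Proof.
rewrite !cardZ mulr_sumr -!sumrB; apply: eq_bigr => y _; rewrite !inE.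
by case: (y \in U); case: (y \in V').
Qed.

Lemma set_ind_card (P : {set V} -> Prop) : P set0 ->
  (forall (D : {set V}) (z : V), z \notin D -> P D -> P (z |: D)) -> forall D, P D.
Proof.
move=> h0 hS D; move: {2}#|D| (erefl #|D|) => n; elim: n D => [|n IH] D hD.
  by move: hD => /eqP; rewrite cards_eq0 => /eqP ->.
case: (set_0Vmem D) => [-> //|[z zD]].
rewrite -(setD1K zD); apply: hS; first by rewrite setD11.
by apply: IH; move: hD; rewrite (cardsD1 z D) zD => /eqP; rewrite eqSS => /eqP.
Qed.

Variable R : realFieldType.

Definition Phi (D : {set V}) (F : nat -> R) := \sum_(W : {set V}) F #|W :&: D|.
Local Notation N := (#|{set V}|%:R : R).

Lemma toggle_sum (z : V) (H : {set V} -> R) :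
  \sum_(W : {set V} | z \in W) H W = \sum_(W : {set V} | z \notin W) H (z |: W).
Proof.
pose t (W : {set V}) := if z \in W then W :\ z else z |: W.
have tK : involutive t.
  move=> W; rewrite /t; case hW: (z \in W); rewrite ?setD11 ?setU11 /=.
    by rewrite setD1K.
  by rewrite setU1K // hW.
rewrite (reindex_inj (inv_inj tK)); apply: eq_big => W.
  by rewrite /t; case hW: (z \in W); rewrite ?setD11 ?setU11.
by rewrite /t; case hW: (z \in W) => //; rewrite setD11.
Qed.

Lemma Phi_half (D : {set V}) (z : V) (zD : z \notin D) F :
  \sum_(W : {set V} | z \notin W) F #|W :&: D| = Phi D F / 2.
Proof.
rewrite /Phi [X in _ = X / 2](bigID (fun W : {set V} => z \in W)) /= toggle_sum.
have e : forall W : {set V}, (z |: W) :&: D = W :&: D.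
  move=> W; apply/setP => y; rewrite !inE.
  by case: (y =P z) => [->|]; rewrite ?(negbTE zD) ?andbF.
have -> : \sum_(W : {set V} | z \notin W) F #|(z |: W) :&: D| =
  \sum_(W : {set V} | z \notin W) F #|W :&: D| by apply: eq_bigr => W _; rewrite e.
set S := \sum_(_ | _) _; lra.
Qed.

Lemma Phi_step (D : {set V}) (z : V) (zD : z \notin D) F :
  Phi (z |: D) F = (Phi D F + Phi D (fun j => F j.+1)) / 2.
Proof.
rewrite {1}/Phi (bigID (fun W : {set V} => z \in W)) /= toggle_sum.
have e1 : forall W : {set V}, z \notin W -> (z |: W) :&: (z |: D) = z |: (W :&: D).
  move=> W _; apply/setP => y; rewrite !inE.
  by case: (y =P z).
have e2 : forall W : {set V}, z \notin W -> W :&: (z |: D) = W :&: D.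
  move=> W zW; apply/setP => y; rewrite !inE.
  by case: (y =P z) => [->|]; rewrite ?(negbTE zW).
have -> : \sum_(W : {set V} | z \notin W) F #|(z |: W) :&: (z |: D)| =
  \sum_(W : {set V} | z \notin W) (fun j => F j.+1) #|W :&: D|.
  apply: eq_bigr => W zW; rewrite e1 // cardsU1 inE (negbTE zW) //.
have -> : \sum_(W : {set V} | z \notin W) F #|W :&: (z |: D)| =
  \sum_(W : {set V} | z \notin W) F #|W :&: D|.
  by apply: eq_bigr => W zW; rewrite e2.
have h := Phi_half zD (fun j => F j.+1); rewrite /= in h; rewrite h Phi_half //; lra.
Qed.

Lemma sumN (c : R) : \sum_(W : {set V}) c = c * N.
Proof. rewrite sumr_const mulr_natr; congr (c *+ _); exact: eq_card. Qed.

Lemma Phi_lin D (a b : R) F : Phi D (fun j => a * F j + b) = a * Phi D F + b * N.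
Proof. by rewrite /Phi big_split /= -mulr_sumr sumN. Qed.

Lemma Phi0 F : Phi set0 F = N * F 0%N.
Proof.
rewrite /Phi (eq_bigr (fun _ => F 0%N)); first by rewrite sumN mulrC.
by move=> W _; rewrite setI0 cards0.
Qed.

Lemma Phi_bin : forall D b,
  Phi D (fun j => (j == b)%:R) * 2 ^+ #|D| = N * 'C(#|D|, b)%:R.
Proof.
apply: (set_ind_card (P := fun D => forall b,
  Phi D (fun j => (j == b)%:R) * 2 ^+ #|D| = N * 'C(#|D|, b)%:R)).
  by move=> b; rewrite Phi0 cards0 expr0 mulr1 bin0n eq_sym.
move=> D z zD IH b; rewrite Phi_step // cardsU1 zD add1n exprS.
set X := 2 ^+ #|D|.
case: b => [|b].
  have -> : Phi D (fun j => (j.+1 == 0)%:R) = 0 by apply: big1.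
  have := IH 0%N; rewrite !bin0 => <-; by rewrite /X addr0; field.
rewrite (binS #|D| b) natrD mulrDr -IH -IH /=.
have -> : Phi D (fun j => (j.+1 == b.+1)%:R) = Phi D (fun j => (j == b)%:R) by [].
by rewrite /X; field.
Qed.

Lemma Phi_var : forall D,
  Phi D (fun j => (j%:R - #|D|%:R / 2)^+2) = N * #|D|%:R / 4.
Proof.
apply: (set_ind_card (P := fun D =>
  Phi D (fun j => (j%:R - #|D|%:R / 2)^+2) = N * #|D|%:R / 4)).
  by rewrite Phi0 cards0 /=; field.
move=> D z zD IH; rewrite Phi_step // cardsU1 zD add1n.
have -> : Phi D (fun j => (j%:R - #|D|.+1%:R / 2) ^+ 2) +
   Phi D (fun j => (j.+1%:R - #|D|.+1%:R / 2) ^+ 2) =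
   Phi D (fun j => 2 * (j%:R - #|D|%:R / 2)^+2 + 1/2).
  rewrite /Phi -big_split; apply: eq_bigr => W _ /=.
  by rewrite -(natr1 #|W :&: D|) -(natr1 #|D|); field.
rewrite Phi_lin IH -(natr1 #|D|); by field.
Qed.

End SetPart.

Section G.
Variables (V2 : finType) (R : realType).
Local Notation N := (#|{set V2}|%:R : R).

Lemma intRB (a b : nat) : (((a%:Z - b%:Z)%:~R) : R) = a%:R - b%:R.
Proof. by rewrite rmorphB. Qed.

Lemma transfer (U V' : {set V2}) (G : int -> R) :
  \sum_(W : {set V2}) G (#|U :&: W|%:Z - #|V' :&: W|%:Z) =
  Phi ((U :\: V') :|: (V' :\: U)) (fun j => G (j%:Z - #|V' :\: U|%:Z)).
Proof.
rewrite (reindex_inj (inv_inj (sdiff_inv (V' :\: U)))) /=.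
by apply: eq_bigr => W _; rewrite diff_key.
Qed.

Lemma bad_bound (U V' : {set V2}) (s : R) : 0 < s -> #|V2|%:R <= s ^+ 2 ->
  `|#|U|%:R - #|V'|%:R| <= s ->
  \sum_(W : {set V2})
     (~~ (`|(((#|U :&: W|%:Z - #|V' :&: W|%:Z)%:~R) : R)| <= 3 * s))%:R <= N / 25.
Proof.
move=> s0 hn hdeg; rewrite (transfer U V' (fun a => (~~ (`|(a%:~R : R)| <= 3 * s))%:R)).
set D := (U :\: V') :|: (V' :\: U); set b := #|V' :\: U|.
have hk := deg_key U V'.
have hdb : `|#|D|%:R / 2 - b%:R| <= s / 2 :> R.
  have := congr1 (fun z : int => (z%:~R : R)) hk; rewrite /= !rmorphB /= rmorphM /= => e.
  have e' : #|D|%:R / 2 - b%:R = (#|U|%:R - #|V'|%:R) / 2 :> R.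
    have e2 : #|D|%:R - 2 * b%:R = #|U|%:R - #|V'|%:R :> R := e.
    by rewrite -e2; field.
  rewrite e' normrM.
  have h2 : `|2^-1 : R| = 2^-1 by rewrite ger0_norm // invr_ge0.
  rewrite h2; lra.
have hd : #|D|%:R <= s ^+ 2 :> R.
  by apply: le_trans hn; rewrite ler_nat max_card.
apply: (@le_trans _ _ (Phi D (fun j => (4 / (25 * s ^+ 2)) * (j%:R - #|D|%:R / 2) ^+ 2 + 0))).
  apply: ler_sum => W _; rewrite intRB.
  set j := #|W :&: D|.
  have hpos : 0 <= 4 / (25 * s ^+ 2) * (j%:R - #|D|%:R / 2) ^+ 2 + 0 :> R.
    by rewrite addr0 mulr_ge0 // ?sqr_ge0 // divr_ge0 // mulr_ge0 // sqr_ge0.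
  case: (boolP (`|j%:R - b%:R| <= 3 * s)) => //= hg.
  rewrite -ltNge in hg.
  have h1 : `|j%:R - b%:R| <= `|j%:R - #|D|%:R / 2| + `|#|D|%:R / 2 - b%:R| :> R.
    exact: (ler_distD (#|D|%:R / 2 : R)).
  have h2 : 5 / 2 * s <= `|j%:R - #|D|%:R / 2| :> R by lra.
  set u := `|j%:R - #|D|%:R / 2| in h2.
  have h3 : (j%:R - #|D|%:R / 2) ^+ 2 = u ^+ 2 :> R by rewrite /u real_normK // num_real.
  have h4 : (5 / 2 * s) ^+ 2 <= u ^+ 2 by rewrite !expr2; apply: ler_pM; lra.
  have h5 : 4 / (25 * s ^+ 2) * (5 / 2 * s) ^+ 2 = 1 :> R.
    by field; exact: lt0r_neq0.
  have h7 : 0 <= 4 / (25 * s ^+ 2) :> R by rewrite divr_ge0 // mulr_ge0 // sqr_ge0.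
  have h6 := ler_wpM2l h7 h4; rewrite h5 in h6.
  by rewrite h3 addr0.
rewrite Phi_lin Phi_var mul0r addr0.
have hs2 : 0 < s ^+ 2 by rewrite exprn_gt0.
have e : 4 / (25 * s ^+ 2) * (N * #|D|%:R / 4) = N / 25 * (#|D|%:R / s ^+ 2).
  by field; rewrite gt_eqF.
rewrite e -[X in _ <= X]mulr1; apply: ler_wpM2l.
  by rewrite divr_ge0.
by rewrite ler_pdivrMr // mul1r.
Qed.

Lemma coll_bound (U V' : {set V2}) (s c : R) : 0 < s -> 0 < c ->
  c ^+ 2 * s ^+ 2 <= #|(U :\: V') :|: (V' :\: U)|%:R ->
  c * s * \sum_(W : {set V2}) ((#|U :&: W|%:Z - #|V' :&: W|%:Z) == 0)%:R <= N.
Proof.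
move=> s0 c0 hd.
rewrite (transfer U V' (fun a => (a == 0)%:R)).
set D := (U :\: V') :|: (V' :\: U) in hd *; set b := #|V' :\: U|.
have -> : Phi D (fun j => (((j%:Z - b%:Z) == 0)%:R : R)) = Phi D (fun j => ((j == b)%:R : R)).
  by rewrite /Phi; apply: eq_bigr => W _; rewrite subr_eq0 eqz_nat.
have hb := Phi_bin R D b.
move: hb; set p := Phi D _; set C := 'C(#|D|, b) => hb.
have hC : (C ^ 2 * #|D|.+1 <= 4 ^ #|D|)%N := bin_sq _ _.
set X := (2 : R) ^+ #|D| in hb.
have X0 : 0 < X by rewrite exprn_gt0.
have hCR : (C%:R) ^+ 2 * (#|D|.+1)%:R <= X ^+ 2 :> R.
  have : ((C ^ 2 * #|D|.+1)%:R <= (4 ^ #|D|)%:R :> R) by rewrite ler_nat.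
  have e4 : (2:R) ^+ 2 = 4 by rewrite expr2; ring.
  by rewrite natrM !natrX /X -exprM mulnC exprM e4.
have hp : p = N * (C%:R / X) by apply: (mulIf (lt0r_neq0 X0)); rewrite hb; field; exact: lt0r_neq0.
set r := C%:R / X in hp.
have r0 : 0 <= r by rewrite divr_ge0 // ltW.
have hr : r ^+ 2 * (#|D|.+1)%:R <= 1.
  rewrite /r expr_div_n -mulrA mulrC -mulrA ler_pdivrMl ?exprn_gt0 // mulr1 mulrC //.
have hN : 0 <= N by [].
have hd1 : c ^+ 2 * s ^+ 2 <= (#|D|.+1)%:R by rewrite -natr1; lra.
have hcsr : (c * s * r) ^+ 2 <= 1.
  have -> : (c * s * r) ^+ 2 = r ^+ 2 * (c ^+ 2 * s ^+ 2) by ring.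
  apply: le_trans hr; apply: ler_wpM2l => //; exact: sqr_ge0.
have : c * s * r <= 1.
  by rewrite -(expr_le1 (n := 2)) // mulr_ge0 // mulr_ge0 // ltW.
move=> h1; rewrite hp.
have -> : c * s * (N * r) = N * (c * s * r) by ring.
by rewrite -[X in _ <= X]mulr1; apply: ler_wpM2l.
Qed.

End G.
Unset Implicit Arguments. Set Strict Implicit.

Lemma card_sumR (R : numDomainType) (T : finType) (A : {set T}) (p : pred T) :
  (#|[set x in A | p x]|%:R : R) = \sum_(x in A) ((p x)%:R : R).
Proof.
rewrite -sum1_card natr_sum big_mkcond /= [RHS]big_mkcond /=.
by apply: eq_bigr => x _; rewrite inE; case: (x \in A); case: (p x).
Qed.

Lemma card_sumR1 (R : numDomainType) (T : finType) (A : {set T}) :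
  (#|A|%:R : R) = \sum_(x : T) ((x \in A)%:R : R).
Proof.
rewrite -sum1_card natr_sum big_mkcond /=.
by apply: eq_bigr => x _; case: (x \in A).
Qed.

Theorem lemma3p3 (R : realType) (eps : R) (heps : 0 < eps) :
  exists delta : R, 0 < delta /\
  forall (V1 V2 : finType) (E : V1 -> V2 -> bool) (x0 : V1) (P : {set V1}),
    (#|V2| <= 2 * #|V1|)%N ->
    pair_star E eps (Num.truncn (Num.sqrt (#|V2|%:R : R))) x0 P ->
    3 / 4 <=
      (#|[set W : {set V2} |
           delta * Num.sqrt (#|V2|%:R : R) <= (size (@A_set V1 V2 E R W x0 P))%:R]|%:R
       / (#|{set V2}|%:R : R)).
Proof.
pose c := eps / (1 + eps).
have e1 : 0 < 1 + eps by lra.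
have hc : c * (1 + eps) = eps by rewrite /c; field; rewrite gt_eqF.
have c0 : 0 < c by rewrite /c divr_gt0.
have c1 : c <= 1 by rewrite /c ler_pdivrMr // mul1r; lra.
have cc : c ^+ 2 <= eps by rewrite expr2; nra.
exists (c / 40); split; first by rewrite divr_gt0.
move=> V1 V2 E x0 P _ [x0P cardP hdeg hdiv].
set s := Num.sqrt (#|V2|%:R : R) in cardP hdeg *.
set N := (#|{set V2}|%:R : R).
set G := [set W : {set V2} | _].
have N0 : 0 < N by rewrite ltr0n; apply/card_gt0P; exists set0.
rewrite ler_pdivlMr //.
have s0 : 0 <= s by exact: sqrtr_ge0.
have ss : s ^+ 2 = #|V2|%:R by rewrite sqr_sqrtr.
case: (posnP #|V2|) => hn.
  have s00 : s = 0 by rewrite /s hn sqrtr0.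
  have -> : #|G| = #|{set V2}| by apply: eq_card => W; rewrite inE s00 mulr0 ler0n.
  rewrite -/N; lra.
have s1 : 1 <= s.
  by rewrite -sqrtr1 ler_sqrt // ler1n.
set k := Num.truncn s in cardP.
have hk1 : k%:R <= s by rewrite truncn_le.
have hk2 : s < k.+1%:R by exact: truncnS_gt.
have k1 : (1 <= k)%N by rewrite truncn_ge_nat.
set Q := P :\ x0.
have cQ : #|Q| = k by move: cardP; rewrite (cardsD1 x0 P) x0P add1n => -[].
pose beta := c / 20.
pose q := minn k (Num.truncn (beta * s)).+1.
have bs0 : 0 <= beta * s by rewrite mulr_ge0 // divr_ge0 // ltW.
have hq1 : q%:R - 1 <= beta * s.
  have : (q <= (Num.truncn (beta * s)).+1)%N by rewrite geq_minr.
  rewrite -(ler_nat R) -natr1 => h.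
  have := truncn_le (beta * s); rewrite bs0 => h2; lra.
have hq2 : beta * s <= q%:R.
  rewrite /q /minn; case: ifP => _.
    have : 2 * k%:R >= k.+1%:R :> R by rewrite -natr1; have := ler_nat R 1 k; rewrite k1; lra.
    rewrite /beta; nra.
  exact: ltW (truncnS_gt _).
have q1 : (1 <= q)%N by rewrite leq_min k1.
have qk : (q <= k)%N by rewrite geq_minl.
pose Q' := [set x in take q (enum Q)].
have cQ' : #|Q'| = q.
  rewrite cardsE (card_uniqP _); last by rewrite take_uniq // enum_uniq.
  by rewrite size_takel // -cardE cQ.
have sQ : Q' \subset Q.
  by apply/subsetP => x; rewrite inE => /mem_take; rewrite mem_enum.
pose f := fun (W : {set V2}) (x : V1) => ((degS E W x)%:Z - (degS E W x0)%:Z).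
pose good := fun a : int => `|(a%:~R : R)| <= 3 * s.
pose badc W := #|[set x in Q' | ~~ good (f W x)]|.
pose collc W := (\sum_(x in Q') #|[set y in Q' | (y != x) && (f W y == f W x)]|)%N.
pose Y W := ((badc W + collc W)%:R : R).
have hdc (W : {set V2}) : (q <= size (@A_set V1 V2 E R W x0 P) + badc W + collc W)%N.
  by rewrite -cQ'; exact: (distinct_count (f W) good sQ).
have hpt (W : {set V2}) : q%:R - 2 * Y W <= q%:R * ((W \in G)%:R).
  have := hdc W; rewrite -(ler_nat R) !natrD => h.
  have Y0 : 0 <= Y W by rewrite ler0n.
  case hW: (W \in G).
    rewrite mulr1; lra.
  move: hW; rewrite /G inE => /negbT; rewrite -ltNge => hW.
  rewrite mulr0.
  have : c / 40 * s <= q%:R / 2 by rewrite /beta in hq2; lra.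
  rewrite /Y natrD in Y0 *; lra.
have hG : q%:R * N - 2 * \sum_(W : {set V2}) Y W <= q%:R * #|G|%:R.
  rewrite card_sumR1 mulr_sumr mulr_sumr -(sumN V2 q%:R) -sumrB.
  by apply: ler_sum => W _; exact: hpt.
have s0' : 0 < s by lra.
have hn2 : (#|V2|%:R : R) <= s ^+ 2 by rewrite ss.
have hQP : forall x, x \in Q' -> (x \in P) && (x != x0).
  by move=> x /(subsetP sQ); rewrite !inE andbC.
have hB : \sum_(W : {set V2}) ((badc W)%:R : R) <= q%:R * (N / 25).
  rewrite (eq_bigr (fun W => \sum_(x in Q') ((~~ good (f W x))%:R : R))); last first.
    by move=> W _; rewrite /badc card_sumR.
  rewrite exchange_big /=.
  apply: le_trans (_ : \sum_(x in Q') (N / 25) <= _).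
    apply: ler_sum => x xQ; have /andP [xP _] := hQP x xQ.
    have hb := (bad_bound (U := nbh E x) (V' := nbh E x0) s0' hn2 (hdeg x xP)).
    exact: hb.
  by rewrite sumr_const cQ' mulr_natl.
pose M := N / (c * s).
have hpair : forall x y, x \in Q' -> y \in Q' -> y != x ->
    \sum_(W : {set V2}) (((y != x) && (f W y == f W x))%:R : R) <= M.
  move=> x y xQ yQ yx.
  have /andP [xP _] := hQP x xQ; have /andP [yP _] := hQP y yQ.
  have hd : c ^+ 2 * s ^+ 2 <= #|(nbh E y :\: nbh E x) :|: (nbh E x :\: nbh E y)|%:R.
    apply: le_trans (hdiv y x yP xP yx); rewrite ss ler_wpM2r //.
  have hb := coll_bound s0' c0 hd.
  rewrite /M ler_pdivlMr; last by rewrite mulr_gt0.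
  rewrite mulrC; apply: le_trans hb; rewrite le_eqVlt; apply/orP; left; apply/eqP.
  congr (_ * _); apply: eq_bigr => W _; rewrite yx /=; congr (_%:R).
  by rewrite /f -subr_eq0 opprB addrA subrK.
have M0 : 0 <= M by apply: divr_ge0; [exact: ltW | apply: mulr_ge0; exact: ltW].
have hC : \sum_(W : {set V2}) ((collc W)%:R : R) <= q%:R * ((q%:R - 1) * M).
  rewrite (eq_bigr (fun W => \sum_(x in Q') \sum_(y in Q')
      (((y != x) && (f W y == f W x))%:R : R))); last first.
    by move=> W _; rewrite /collc natr_sum; apply: eq_bigr => x _; rewrite card_sumR.
  rewrite exchange_big /=.
  apply: le_trans (_ : \sum_(x in Q') ((q%:R - 1) * M) <= _); last first.
    by rewrite sumr_const cQ' mulr_natl.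
  apply: ler_sum => x xQ; rewrite exchange_big /= (bigD1 x) //=.
  rewrite big1 ?add0r; last by move=> W _; rewrite eqxx.
  apply: le_trans (_ : \sum_(y in Q' | y != x) M <= _).
    by apply: ler_sum => y /andP [yQ yx]; exact: hpair.
  rewrite sumr_const -[M *+ _]mulr_natl; apply: ler_wpM2r => //.
  have := cardD1 x Q'; rewrite xQ cQ' add1n => hq.
  have -> : #|(fun i : V1 => (i \in Q') && (i != x))| = q.-1.
    by rewrite hq /=; apply: eq_card => y; rewrite [in RHS]inE andbC.
  by rewrite -(prednK q1) -natr1 /= addrK.
have hSY : \sum_(W : {set V2}) Y W = \sum_(W : {set V2}) ((badc W)%:R : R) + \sum_(W : {set V2}) ((collc W)%:R : R).
  by rewrite -big_split; apply: eq_bigr => W _; rewrite /Y natrD.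
have hqM : (q%:R - 1) * M <= N / 20.
  have e : beta * s * M = N / 20.
    rewrite /M /beta; field; rewrite ?gt_eqF //.
  rewrite -e; apply: ler_wpM2r => //.
have q0 : 0 < (q%:R : R) by rewrite ltr0n.
have hfin : q%:R * (41 / 50 * N) <= q%:R * #|G|%:R.
  apply: le_trans hG.
  have h1 := ler_wpM2l (ltW q0) hqM.
  rewrite hSY; lra.
rewrite ler_pM2l // in hfin; lra.
Qed.
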